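(* Let $F=\sum_{g\ge 0}\lambda^{2g-2}F_g(p_1,p_2,\dots;s,u,v)$ be the dessin free energy (defined in the context), and define the genus zero one-point function $$G_{0,1}(x)=\sum_{m\ge 1} m\,\frac{\partial F_0}{\partial p_m}\Big|_{p_k=0,\,k\ge1}\, x^{-m-1}.$$ Then $G_{0,1}$ satisfies $G_{0,1}(x)=\frac{suv}{x^2}+\frac{s(u+v)}{x}G_{0,1}(x)+sG_{0,1}(x)^2$, and $$G_{0,1}(x)=\frac{1}{2s}\Big(1-\frac{s(u+v)}{x}-\sqrt{1-\frac{2s(u+v)}{x}+\frac{s^2(u-v)^2}{x^2}}\Big)=\sum_{n\ge1}\frac{s^n}{x^{n+1}}\sum_{k=1}^n\frac1n\binom{n}{k}\binom{n}{k-1}u^{n+1-k}v^k,$$ where the square root is the formal power series in $x^{-1}$ with constant term $1$. Equivalently, the coefficient of $x^{-n-1}$ is $s^n u^{n+1}N_n(v/u)$, where $N_n(q)=\sum_{k=1}^n N_{n,k}q^k$ is the $n$-th Narayana polynomial, $N_{n,k}=\frac1n\binom nk\binom n{k-1}$.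
   Context: Let $s,u,v$ be parameters and $\lambda$ a genus-tracking parameter. For $n\ge0$ define the dessin Virasoro operators $$L_n=-\frac{n+1}{s}\frac{\partial}{\partial p_{n+1}}+(u+v)n\frac{\partial}{\partial p_n}+\sum_{j\ge1}p_j(n+j)\frac{\partial}{\partial p_{n+j}}+\lambda^2\sum_{i+j=n,\ i,j\ge1}ij\frac{\partial^2}{\partial p_i\partial p_j}+\delta_{n,0}\,uv\,\lambda^{-2}.$$ The dessin free energy $F=\sum_{g\ge0}\lambda^{2g-2}F_g$ (the logarithm of the Kazarian–Zograf generating series of Grothendieck's dessins d'enfants, with $F_g$ formal power series in $p_1,p_2,\dots$ vanishing at $p=0$) is characterized by $L_n e^{F}=0$ for all $n\ge0$. In genus zero this means: for all $n\ge0$, $(u+v)n\,\partial_{p_n}F_0+\sum_{j\ge1}(p_j-\delta_{j,1}/s)(n+j)\partial_{p_{n+j}}F_0+\sum_{i+j=n}ij\,\partial_{p_i}F_0\,\partial_{p_j}F_0+\delta_{n,0}uv=0$. *)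

(* Defs.v *)
From mathcomp Require Import all_boot all_order all_algebra.
Set Implicit Arguments. Unset Strict Implicit. Unset Printing Implicit Defensive.
Import Order.TTheory GRing.Theory Num.Theory.
Local Open Scope ring_scope.

(* A monomial p_1^{e_0} p_2^{e_1} ... is encoded by its exponent list  *)
(* e : seq nat (e`_(k-1) = exponent of p_k); trailing zeros are        *)
(* irrelevant: every coefficient is read through [trim].               *)

Fixpoint trim (e : seq nat) : seq nat :=
  match e with
  | [::] => [::]
  | a :: r => let r' := trim r in
              if (a == 0%N) && (r' == [::]) then [::] else a :: r'
  end.

Definition expo (e : seq nat) (k : nat) : nat := nth 0%N e k.-1.

Definition unitm (k : nat) : seq nat := rcons (nseq k.-1 0%N) 1%N.

Definition addm (e f : seq nat) : seq nat :=
  mkseq (fun i => (nth 0 e i + nth 0 f i)%N) (maxn (size e) (size f)).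
Definition subm (e f : seq nat) : seq nat :=
  mkseq (fun i => (nth 0 e i - nth 0 f i)%N) (maxn (size e) (size f)).

Fixpoint subvecs (e : seq nat) : seq (seq nat) :=
  match e with
  | [::] => [:: [::]]
  | m :: r => [seq k :: a | k <- iota 0 m.+1, a <- subvecs r]
  end.

Section FPS.
Variable R : fieldType.

Definition fps := seq nat -> R.

Definition coef (F : fps) (e : seq nat) : R := F (trim e).

Definition dp (k : nat) (F : fps) : fps :=
  fun e => (expo e k).+1%:R * coef F (addm e (unitm k)).

Definition mulp (j : nat) (F : fps) : fps :=
  fun e => if (0 < expo e j)%N then coef F (subm e (unitm j)) else 0.

Definition fmul (F G : fps) : fps :=
  fun e => \sum_(a <- subvecs e) coef F a * coef G (subm e a).

(* coefficient of p^e in the left-hand side of the genus-zero equation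
   (u+v) n d_{p_n}F0 + sum_{j>=1} (p_j - delta_{j,1}/s)(n+j) d_{p_{n+j}}F0
     + sum_{i+j=n, i,j>=1} i j d_{p_i}F0 d_{p_j}F0 + delta_{n,0} u v.
   The infinite sum over j is locally finite: at the monomial e only the
   j with p_j | p^e, i.e. 1 <= j <= size e, contribute. *)
Definition genus0_lhs (s u v : R) (F : fps) (n : nat) (e : seq nat) : R :=
  (u + v) * n%:R * dp n F e
  + \sum_(1 <= j < (size e).+1) (n + j)%:R * mulp j (dp (n + j) F) e
  - s^-1 * (n + 1)%:R * dp (n + 1) F e
  + \sum_(1 <= i < n) (i * (n - i))%:R * fmul (dp i F) (dp (n - i) F) e
  + (if (n == 0%N) && (trim e == [::]) then u * v else 0).

Definition genus0_free_energy (s u v : R) (F : fps) : Prop :=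
  coef F [::] = 0 /\ forall (n : nat) (e : seq nat), genus0_lhs s u v F n e = 0.

(* Univariate formal power series in y = x^{-1}: A k = coeff of y^k.   *)
Definition ps := nat -> R.
Definition psmul (A B : ps) : ps := fun k => \sum_(i < k.+1) A i * B (k - i)%N.

Definition G01 (F : fps) : ps :=
  fun k => if k is m.+2 then m.+1%:R * dp m.+1 F [::] else 0.

Definition narayana (n k : nat) : R := n%:R^-1 * ('C(n, k) * 'C(n, k.-1))%:R.
Definition narayana_poly (n : nat) (q : R) : R :=
  \sum_(1 <= k < n.+1) narayana n k * q ^+ k.

End FPS.

(* Main.v *)
Require Import Defs.
From mathcomp Require Import all_boot all_order all_algebra.
From mathcomp Require Import ring zify.
From Stdlib Require Import FunctionalExtensionality.
Import Order.TTheory GRing.Theory Num.Theory.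
Local Open Scope ring_scope.
Set Implicit Arguments. Unset Strict Implicit. Unset Printing Implicit Defensive.

Section Aux.
Variable R : fieldType.
Implicit Types A B C : ps R.

Lemma psmulE A B k : psmul A B k = \sum_(0 <= i < k.+1) A i * B (k - i)%N.
Proof. by rewrite big_mkord. Qed.

Lemma psmulC A B k : psmul A B k = psmul B A k.
Proof.
rewrite !psmulE big_nat_rev /=; apply: eq_big_nat => i /andP[_ hi].
by rewrite add0n subSS subKn // mulrC.
Qed.

Lemma psmulDl A B C k : psmul (fun i => A i + B i) C k = psmul A C k + psmul B C k.
Proof. by rewrite /psmul -big_split /=; apply: eq_bigr => i _; rewrite mulrDl. Qed.

Lemma psmulZl a A C k : psmul (fun i => a * A i) C k = a * psmul A C k.
Proof. by rewrite /psmul mulr_sumr; apply: eq_bigr => i _; rewrite mulrA. Qed.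

Lemma psmul_ext A A' B B' k : (forall i, A i = A' i) -> (forall i, B i = B' i) ->
  psmul A B k = psmul A' B' k.
Proof. by move=> hA hB; rewrite /psmul; apply: eq_bigr => i _; rewrite hA hB. Qed.

Lemma psmul_delta j A k : psmul (fun i => (i == j)%:R) A k =
  if (j <= k)%N then A (k - j)%N else 0.
Proof.
rewrite /psmul; case: leqP => hj.
  have hj' : (j < k.+1)%N by [].
  rewrite (bigD1 (Ordinal hj')) //= eqxx mul1r big1 ?addr0 // => i hi.
  have -> : (nat_of_ord i == j) = false.
    by apply/negbTE; apply: contra hi => /eqP h; apply/eqP/val_inj.
  by rewrite mul0r.
rewrite big1 // => i _.
have -> : (nat_of_ord i == j) = false.
  by apply/negbTE; apply/eqP => h; move: (ltn_ord i); rewrite h ltnS leqNgt hj.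
by rewrite mul0r.
Qed.

Definition tr (N : nat) (A : ps R) : {poly R} := \poly_(i < N) A i.

Lemma psmul_poly N A B k : (k < N)%N -> psmul A B k = (tr N A * tr N B)`_k.
Proof.
move=> hk; rewrite coefM /psmul; apply: eq_bigr => i _.
rewrite !coef_poly (leq_ltn_trans (leq_subr _ _) hk).
by rewrite (leq_ltn_trans _ hk) // -ltnS.
Qed.

Lemma psmulA A B C k : psmul (psmul A B) C k = psmul A (psmul B C) k.
Proof.
have e1 : psmul (psmul A B) C k = (tr k.+1 A * tr k.+1 B * tr k.+1 C)`_k.
  rewrite coefM /psmul; apply: eq_bigr => i _.
  rewrite -/(psmul A B i) (psmul_poly (N:=k.+1) A B) ?coef_poly; last by rewrite ltnS -ltnS.
  by rewrite ltnS leq_subr.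
have e2 : psmul A (psmul B C) k = (tr k.+1 A * (tr k.+1 B * tr k.+1 C))`_k.
  rewrite coefM /psmul; apply: eq_bigr => i _.
  rewrite -/(psmul B C _) (psmul_poly (N:=k.+1) B C) ?coef_poly ?ltnS ?leq_subr //.
  by rewrite (_ : (i <= k)%N = true) // -ltnS ltn_ord.
by rewrite e1 e2 mulrA.
Qed.

Definition Dps (A : ps R) : ps R := fun k => k.+1%:R * A k.+1.

Lemma psmul_D A B k : Dps (psmul A B) k = psmul (Dps A) B k + psmul A (Dps B) k.
Proof.
rewrite /Dps (psmul_poly (N:=k.+2) A B) //.
rewrite mulr_natl -coef_deriv derivM coefD !coefM.
congr (_ + _); rewrite /psmul; apply: eq_bigr => i _.
  rewrite coef_deriv !coef_poly.
  have hi : (i < k.+1)%N by [].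
  rewrite ltnS hi (_ : (k - i < k.+2)%N); last by rewrite ltnS (leq_trans (leq_subr _ _)).
  by rewrite mulr_natl.
rewrite coef_deriv !coef_poly.
have hi : (i < k.+1)%N by [].
rewrite (_ : (i < k.+2)%N); last by rewrite ltnW.
rewrite (_ : ((k - i).+1 < k.+2)%N); last by rewrite ltnS ltnS leq_subr.
by rewrite mulr_natl.
Qed.

End Aux.

Section Nar.
Variable R : fieldType.
Hypothesis hchar : [pchar R] =i pred0.

Lemma natr_nz n : (n.+1%:R : R) != 0.
Proof. by rewrite ((pcharf0P R).1 hchar). Qed.

Definition Mn (n k : nat) : nat := if k is k'.+1 then ('C(n, k'.+1) * 'C(n, k'))%N else 0%N.
Definition sh (f : nat -> R) : nat -> R := fun k => if k is k'.+1 then f k' else 0.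
Definition Mr n : nat -> R := fun k => (Mn n k)%:R.

Lemma binrel n m : ((n.+1)%:R * ('C(n, m))%:R : R) = (m.+1)%:R * (('C(n, m.+1))%:R + ('C(n, m))%:R).
Proof. by rewrite -natrD -!natrM -binS -mul_bin_diag. Qed.

Ltac nzs := rewrite ?nat1r -?natrD; repeat (apply/andP; split); rewrite ?((pcharf0P R).1 hchar) ?addn_eq0 //.

Lemma CI n k :
  (n + 3)%:R * ((n + 2)%:R^-1 * Mr (n + 2) k) =
  (2 * n + 3)%:R * ((n + 1)%:R^-1 * Mr (n + 1) k + sh (fun i => (n + 1)%:R^-1 * Mr (n + 1) i) k)
  - (Mr n k - 2%:R * sh (Mr n) k + sh (sh (Mr n)) k) :> R.
Proof.
have h1 := natr_nz n; have h2 := natr_nz n.+1; have h3 := natr_nz 1.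
rewrite !addn1 !addn2 !addn3.
case: k => [|[|[|j]]] /=; rewrite /Mr /Mn.
- ring.
- rewrite !bin1 !bin0 !muln1.
  field. nzs.
- rewrite !binS !bin1 !bin0 !natrM !natrD.
  have e := binrel n 1; rewrite bin1 in e.
  have ez : ('C(n, 2))%:R = ((n.+1)%:R * n%:R / 2%:R - n%:R : R).
    apply: (mulfI h3); rewrite e; field; done.
  rewrite ez. field. nzs.
- rewrite !binS !natrM !natrD.
  have e0 := binrel n j.+2; have e1 := binrel n j.+1; have e2 := binrel n j.
  have f0 : ('C(n, j.+3))%:R = (n.+1%:R / j.+3%:R - 1) * ('C(n, j.+2))%:R :> R.
    rewrite mulrBl mul1r mulrAC e0.
    field. nzs.
  have f1 : ('C(n, j.+2))%:R = (n.+1%:R / j.+2%:R - 1) * ('C(n, j.+1))%:R :> R.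
    rewrite mulrBl mul1r mulrAC e1.
    field. nzs.
  have f2 : ('C(n, j.+1))%:R = (n.+1%:R / j.+1%:R - 1) * ('C(n, j))%:R :> R.
    rewrite mulrBl mul1r mulrAC e2.
    field. nzs.
  rewrite f0 f1 f2. field. nzs.
Qed.


Variables u v : R.

Definition Hom (f : nat -> R) (d : nat) : R :=
  \sum_(0 <= k < d.+1) f k * u ^+ (d - k) * v ^+ k.

Lemma Hom_ext f g d : (forall k, f k = g k) -> Hom f d = Hom g d.
Proof. by move=> h; rewrite /Hom; apply: eq_bigr => k _; rewrite h. Qed.

Lemma HomD f g d : Hom f d + Hom g d = Hom (fun k => f k + g k) d.
Proof. by rewrite /Hom -big_split; apply: eq_bigr => k _ /=; ring. Qed.

Lemma HomB f g d : Hom f d - Hom g d = Hom (fun k => f k - g k) d.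
Proof. by rewrite /Hom -sumrN -big_split; apply: eq_bigr => k _ /=; ring. Qed.

Lemma HomZ a f d : a * Hom f d = Hom (fun k => a * f k) d.
Proof. by rewrite /Hom mulr_sumr; apply: eq_bigr => k _ /=; ring. Qed.

Lemma Hom_u f d : f d.+1 = 0 -> u * Hom f d = Hom f d.+1.
Proof.
move=> hf; rewrite /Hom mulr_sumr (big_nat_recr d.+1) //= hf.
rewrite (eq_big_nat _ _ (F2 := fun k => f k * u ^+ (d.+1 - k) * v ^+ k)); first by ring.
move=> k /andP[_ hk]; rewrite subSn // exprS; ring.
Qed.

Lemma Hom_v f d : v * Hom f d = Hom (sh f) d.+1.
Proof.
rewrite /Hom /sh mulr_sumr [in RHS]big_nat_recl //=.
rewrite (eq_big_nat _ _ (F2 := fun k => f k * u ^+ (d.+1 - k.+1) * v ^+ k.+1)); first by ring.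
by move=> k _; rewrite subSS exprS; ring.
Qed.

Lemma Hom_upv f d : f d.+1 = 0 -> (u + v) * Hom f d = Hom (fun k => f k + sh f k) d.+1.
Proof. by move=> hf; rewrite mulrDl Hom_u // Hom_v HomD. Qed.

Lemma Hom_umv f d : f d.+1 = 0 -> (u - v) * Hom f d = Hom (fun k => f k - sh f k) d.+1.
Proof. by move=> hf; rewrite mulrBl Hom_u // Hom_v HomB. Qed.

Definition Nf (n k : nat) : R := n%:R^-1 * Mr n k.

Lemma Mr_small n k : (n < k)%N -> Mr n k = 0.
Proof. by case: k => [//|k] hk; rewrite /Mr /Mn bin_small. Qed.

Lemma Nf_small n k : (n < k)%N -> Nf n k = 0.
Proof. by move=> h; rewrite /Nf Mr_small // mulr0. Qed.

Lemma nNf n k : n%:R * Nf n k = Mr n k.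
Proof.
case: n => [|n]; last by rewrite /Nf mulrA mulfV ?mul1r // natr_nz.
by case: k => [|k]; rewrite /Nf /Mr /Mn ?bin0n //= !mul0r.
Qed.

Definition X (n : nat) : R := \sum_(1 <= k < n.+1) narayana R n k * u ^+ (n + 1 - k) * v ^+ k.

Lemma X_Hom n : X n = Hom (Nf n) n.+1.
Proof.
rewrite /X /Hom [in RHS]big_nat_recl //= [in RHS](big_nat_recr n) //= (Nf_small (k:=n.+1)) //.
have -> : Nf n 0 = 0 by rewrite /Nf /Mr /= mulr0.
rewrite big_add1 /=.
rewrite (eq_big_nat _ _ (F2 := fun k => Nf n k.+1 * u ^+ (n.+1 - k.+1) * v ^+ k.+1)); first by ring.
by move=> k _; rewrite addn1.
Qed.

Lemma NR n : (n + 3)%:R * X n.+2 =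
  (2 * n + 3)%:R * (u + v) * X n.+1 - n%:R * (u - v) ^+ 2 * X n.
Proof.
rewrite !X_Hom -[(2 * n + 3)%:R * (u + v) * _]mulrA Hom_upv ?Nf_small //.
rewrite -[n%:R * (u - v) ^+ 2 * _]mulrA [in X in _ - X]mulrCA [n%:R * Hom _ _]HomZ.
rewrite (Hom_ext (f := fun k => n%:R * Nf n k) (g := Mr n)); last by move=> k; rewrite nNf.
rewrite expr2 -[(u - v) * (u - v) * _]mulrA Hom_umv; last by rewrite Mr_small //; lia.
rewrite Hom_umv; last by change (Mr n n.+3 - Mr n n.+2 = 0); rewrite !Mr_small ?subrr //; lia.
rewrite [(n + 3)%:R * _]HomZ [(2 * n + 3)%:R * _]HomZ HomB; apply: Hom_ext => k.
have := CI n k; rewrite !addn1 !addn2 !addn3 /Nf /sh.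
case: k => [|k] /= h; apply: (etrans h); ring.
Qed.

End Nar.

Section Sqrt.
Variable R : fieldType.
Hypothesis hchar : [pchar R] =i pred0.
Variables (s u v : R) (G : ps R).
Hypothesis hs : s != 0.
Hypothesis G0 : G 0%N = 0.
Hypothesis G1 : G 1%N = 0.
Hypothesis Gq : forall k : nat,
     G k = s * u * v * (k == 2%N)%:R
           + s * (u + v) * (if k is k'.+1 then G k' else 0)
           + s * psmul G G k.

Lemma two_nz : (2%:R : R) != 0.
Proof. exact: (natr_nz hchar 1). Qed.

Definition Tf : ps R := fun k => ((k == 0%N)%:R + (- (s * (u + v))) * (k == 1%N)%:R)
   + (- (2%:R * s)) * G k.

Definition radf : ps R := fun k => (k == 0%N)%:R - 2%:R * s * (u + v) * (k == 1%N)%:R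
        + s ^+ 2 * (u - v) ^+ 2 * (k == 2%N)%:R.

Lemma TT k : psmul Tf Tf k = radf k.
Proof.
have hP : psmul G G k = s^-1 * (G k - s * u * v * (k == 2%N)%:R
   - s * (u + v) * (if k is k'.+1 then G k' else 0)).
  by rewrite [in RHS](Gq k); field.
rewrite {1}/Tf psmulDl psmulDl psmulZl psmulZl !psmul_delta psmulC.
rewrite /Tf psmulDl psmulDl psmulZl psmulZl !psmul_delta hP /radf; clear hP.
case: k => [|[|[|k]]] /=; rewrite ?G0 ?G1; field; rewrite ?hs ?two_nz //.
Qed.


Lemma sqrt_uniq (S T : ps R) : S 0%N = 1 -> T 0%N = 1 ->
  (forall k, psmul S S k = psmul T T k) -> forall k, S k = T k.
Proof.
move=> S0 T0 E; elim/ltn_ind => k IH.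
case: k IH => [|k] IH; first by rewrite S0 T0.
have h := E k.+1.
rewrite !psmulE big_nat_recl // [in RHS]big_nat_recl // !(big_nat_recr k) //= in h.
have hm : \sum_(0 <= i < k) S i.+1 * S (k.+1 - i.+1)%N =
          \sum_(0 <= i < k) T i.+1 * T (k.+1 - i.+1)%N.
  apply: eq_big_nat => i /andP[_ hi]; rewrite !IH //; lia.
rewrite hm subn0 subnn S0 T0 in h.
apply: (mulfI two_nz); apply/eqP; rewrite -subr_eq0; apply/eqP.
have h' := congr1 (fun x => x - (1 * T k.+1 + (\sum_(0 <= i < k) T i.+1 * T (k.+1 - i.+1)%N + T k.+1 * 1))) h.
rewrite /= subrr in h'.
rewrite -h'; ring.
Qed.

Lemma part2 (S : ps R) : S 0%N = 1 -> (forall k, psmul S S k = radf k) ->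
  forall k, G k = (2%:R * s)^-1 * ((k == 0%N)%:R - s * (u + v) * (k == 1%N)%:R - S k).
Proof.
move=> S0 SS k.
have -> : S k = Tf k.
  apply: sqrt_uniq => // [|j]; first by rewrite /Tf /= G0; ring.
  by rewrite SS TT.
rewrite /Tf; field; rewrite ?hs ?two_nz //.
Qed.


Lemma psmul_extl (A A' B : ps R) k : (forall i, A i = A' i) -> psmul A B k = psmul A' B k.
Proof. by move=> h; apply: psmul_ext. Qed.
Lemma psmul_extr (A B B' : ps R) k : (forall i, B i = B' i) -> psmul A B k = psmul A B' k.
Proof. by move=> h; apply: psmul_ext. Qed.

Lemma GR j : (j.+3)%:R * G j.+3 = (2 * j + 3)%:R * (s * (u + v)) * G j.+2
    - j%:R * (s ^+ 2 * (u - v) ^+ 2) * G j.+1.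
Proof.
have TTf : psmul Tf Tf = radf := functional_extensionality _ _ TT.
have h1 : forall k, psmul Tf (Dps Tf) k = 2%:R^-1 * Dps radf k.
  move=> k; have := psmul_D Tf Tf k; rewrite TTf (psmulC (Dps Tf)) => ->.
  field; exact: two_nz.
have h2 : forall k, psmul radf (Dps Tf) k = 2%:R^-1 * psmul Tf (Dps radf) k.
  move=> k; rewrite -[in LHS]TTf psmulA (psmul_extr _ _ h1).
  by rewrite psmulC psmulZl psmulC.
have hD : forall i, Dps radf i = (-(2%:R * s * (u + v))) * (i == 0%N)%:R
     + (2%:R * (s ^+ 2 * (u - v) ^+ 2)) * (i == 1%N)%:R.
  by case=> [|[|i]]; rewrite /Dps /radf /=; ring.
have hR : forall i, radf i = ((i == 0%N)%:R + (-(2%:R * s * (u + v))) * (i == 1%N)%:R)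
     + (s ^+ 2 * (u - v) ^+ 2) * (i == 2%N)%:R.
  by move=> i; rewrite /radf; ring.
have n2s : - (2%:R * s) != 0 :> R by rewrite oppr_eq0 mulf_neq0 ?hs ?two_nz.
have e := h2 j.+2.
rewrite (psmul_extl _ _ hR) psmulDl psmulDl psmulZl psmulZl !psmul_delta in e.
rewrite (psmul_extr _ _ hD) psmulC psmulDl psmulZl psmulZl !psmul_delta in e.
rewrite /Dps /Tf /= ?subSS ?subn0 /= in e.
case: j e => [|j] e; rewrite ?G1 in e.
  apply/eqP; rewrite -subr_eq0; apply/eqP.
  move/eqP: e; rewrite -subr_eq0 => /eqP e.
  rewrite -[RHS](mulr0 (- (2%:R * s))^-1) -[in RHS]e.
  rewrite ?G1; field; rewrite ?hs ?two_nz //; exact/eqP.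
apply/eqP; rewrite -subr_eq0; apply/eqP.
move/eqP: e; rewrite -subr_eq0 => /eqP e.
rewrite -[RHS](mulr0 (- (2%:R * s))^-1) -[in RHS]e.
rewrite /=.
field; rewrite ?hs ?two_nz //; exact/eqP.
Qed.


Lemma GX n : G n.+1 = s ^+ n * X u v n.
Proof.
suff H : forall n, G n.+1 = s ^+ n * X u v n /\ G n.+2 = s ^+ n.+1 * X u v n.+1.
  by case: (H n).
clear n; elim=> [|n [IH1 IH2]].
  split; first by rewrite G1 expr0 mul1r /X big_geq.
  rewrite Gq psmulE !big_nat_recl // big_geq // /X big_nat1 /narayana /= G0 G1.
  rewrite (_ : (1 + 1 - 1 = 1)%N) // bin1 bin0; field; exact: oner_neq0.
split; first exact: IH2.
apply: (mulfI (natr_nz hchar n.+2)).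
rewrite (GR n) IH1 IH2.
transitivity (s ^+ n.+2 * ((n + 3)%:R * X u v n.+2)); last by rewrite addn3; ring.
rewrite (NR hchar u v n) !exprS; ring.
Qed.

Lemma X_poly n : u != 0 -> X u v n = u ^+ n.+1 * narayana_poly n (v / u).
Proof.
move=> hu; rewrite /X /narayana_poly mulr_sumr; apply: eq_big_nat => k /andP[_ hk].
rewrite exprMn exprVn.
have -> : u ^+ n.+1 = u ^+ (n + 1 - k) * u ^+ k by rewrite -exprD subnK ?addn1 //; lia.
field; exact: expf_neq0.
Qed.

End Sqrt.

Section Conv.
Variable R : fieldType.

Lemma conv (G : ps R) (b : nat -> R) : G 0%N = 0 -> G 1%N = 0 ->
  (forall m, G m.+2 = m.+1%:R * b m.+1) -> forall n,
  psmul G G n.+2 = \sum_(1 <= i < n) (i * (n - i))%:R * (b i * b (n - i)%N).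
Proof.
move=> g0 g1 gb n.
rewrite psmulE big_nat_recl // big_nat_recl //= g0 g1.
case: n => [|n].
  rewrite big_nat1 big_geq // subnn g0; ring.
rewrite (big_nat_recr n.+1) // (big_nat_recr n) //= big_add1 /=.
rewrite (_ : (n.+3 - n.+3 = 0)%N); last by lia.
rewrite (_ : (n.+3 - n.+2 = 1)%N); last by lia.
rewrite g0 g1.
rewrite (eq_big_nat _ _ (F2 := fun i => (i.+1 * (n.+1 - i.+1))%:R * (b i.+1 * b (n.+1 - i.+1)%N))); first by ring.
move=> i /andP[_ hi].
rewrite (_ : (n.+3 - i.+2 = (n - i.+1).+2)%N); last by lia.
rewrite !gb (_ : ((n - i.+1).+1 = n.+1 - i.+1)%N); last by lia.
by rewrite natrM; ring.
Qed.

End Conv.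

Section Eq0.
Variable R : fieldType.
Variables (s u v : R) (F : fps R).
Hypothesis hs : s != 0.
Hypothesis hF0 : forall n e, genus0_lhs s u v F n e = 0.

Lemma fmul_nil (A B : fps R) : fmul A B [::] = A [::] * B [::].
Proof. by rewrite /fmul (_ : subvecs [::] = [:: [::]]) // big_seq1. Qed.

Lemma E0 n : (n.+1)%:R * dp n.+1 F [::] = s * ((u + v) * n%:R * dp n F [::]
   + \sum_(1 <= i < n) (i * (n - i))%:R * (dp i F [::] * dp (n - i)%N F [::])
   + (if n == 0%N then u * v else 0)).
Proof.
have h := hF0 n [::].
rewrite /genus0_lhs big_geq // addn1 (_ : trim [::] = [::]) // andbT in h.
rewrite (eq_bigr (fun i => (i * (n - i))%:R * (dp i F [::] * dp (n - i)%N F [::]))) in h;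
  last by move=> i _; rewrite fmul_nil.
apply/eqP; rewrite -subr_eq0; apply/eqP.
rewrite -[RHS](mulr0 (- s)) -[in RHS]h.
field; exact: hs.
Qed.

End Eq0.
Theorem mainTheorem1 (R : fieldType) (hchar : [pchar R] =i pred0)
  (s u v : R) (hs : s != 0) (F0 : fps R) (hF : genus0_free_energy s u v F0) :
  let G := G01 F0 in
  (* G = s u v / x^2 + s (u+v)/x G + s G^2 *)
  (forall k : nat,
     G k = s * u * v * (k == 2%N)%:R
           + s * (u + v) * (if k is k'.+1 then G k' else 0)
           + s * psmul G G k)
  /\
  (* G = (1/(2s)) (1 - s(u+v)/x - sqrt(1 - 2s(u+v)/x + s^2(u-v)^2/x^2)),
     sqrt = the series in 1/x with constant term 1 squaring to the radicand *)
  (forall S : ps R,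
     S 0%N = 1 ->
     (forall k : nat, psmul S S k =
        (k == 0%N)%:R - 2%:R * s * (u + v) * (k == 1%N)%:R
        + s ^+ 2 * (u - v) ^+ 2 * (k == 2%N)%:R) ->
     forall k : nat,
       G k = (2%:R * s)^-1 * ((k == 0%N)%:R - s * (u + v) * (k == 1%N)%:R - S k))
  /\
  (* explicit Narayana form: coefficient of x^{-n-1} *)
  G 0%N = 0 /\ G 1%N = 0 /\
  (forall n : nat, (1 <= n)%N ->
     G n.+1 = s ^+ n * \sum_(1 <= k < n.+1)
                 narayana R n k * u ^+ (n + 1 - k) * v ^+ k)
  /\
  (u != 0 -> forall n : nat, (1 <= n)%N ->
     G n.+1 = s ^+ n * u ^+ n.+1 * narayana_poly n (v / u)).
Proof.
move=> G.
have [_ hF0] := hF.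
have g0 : G 0%N = 0 by [].
have g1 : G 1%N = 0 by [].
have gb : forall m, G m.+2 = m.+1%:R * dp m.+1 F0 [::] by [].
have Gq : forall k : nat,
     G k = s * u * v * (k == 2%N)%:R
           + s * (u + v) * (if k is k'.+1 then G k' else 0)
           + s * psmul G G k.
  case=> [|[|n]].
  - rewrite psmulE big_nat1 g0 /=; ring.
  - rewrite psmulE !big_nat_recl // big_geq // g0 g1 /=; ring.
  - rewrite (conv (G := G) (b := fun m => dp m F0 [::]) g0 g1 gb n) gb (E0 hs hF0 n) /=.
    case: n => [|n]; rewrite ?g0 ?gb /=; ring.
split; first exact: Gq.
split.
  move=> S S0 SS k; apply: (part2 hchar hs g0 g1 Gq S0) => j.
  by rewrite SS.
split; first exact: g0.
split; first exact: g1.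
split.
  by move=> n _; rewrite (GX hchar hs g0 g1 Gq).
move=> hu n _; by rewrite (GX hchar hs g0 g1 Gq) (X_poly _ hs) // mulrA.
Qed.
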